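(* Let $k$ be a field of characteristic $\neq 2$, let $\mathcal O$ be the Lie algebra described in the context, and let $\mathcal I$ be an ideal of $\mathcal O$. Let $J_{\mathcal I}=\{p(t)\in k[t]: v_0p(t)+v_1p_1(t)+v_2p_2(t)\in\mathcal I\text{ for some }p_1(t),p_2(t)\in k[t]\}$. Then: (i) $J_{\mathcal I}$ is an ideal of $k[t]$; (ii) $\mathcal O J_{\mathcal I}t(t-1)\subseteq\mathcal I\subseteq\mathcal O J_{\mathcal I}$.
   Context: $\mathcal O$ is the Lie algebra over $k$ which is a free $k[t]$-module with basis $v_0,v_1,v_2$, with $k[t]$-bilinear bracket determined by $[v_0,v_1]=-v_2(t-1)$, $[v_1,v_2]=-v_0$, $[v_2,v_0]=v_1t$ (it is isomorphic to the Onsager algebra). For a subset $J\subseteq k[t]$, $\mathcal O J$ denotes $v_0J\oplus v_1J\oplus v_2J$ when $J$ is an ideal; $\mathcal O Jt(t-1)=\mathcal O\,(Jt(t-1))$. *)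

(* Defs.v *)
From HB Require Import structures.
From mathcomp Require Import all_boot all_order all_algebra.
Set Implicit Arguments. Unset Strict Implicit. Unset Printing Implicit Defensive.
Import GRing.Theory.
Local Open Scope ring_scope.

(* An element of the Onsager-type algebra O over k:  v0 * a + v1 * b + v2 * c,
   with a b c : k[t]  (O is the free k[t]-module with basis v0, v1, v2). *)
Record Oelt (k : fieldType) := Ov { c0 : {poly k}; c1 : {poly k}; c2 : {poly k} }.

Section Ons.
Variable k : fieldType.

Definition Ozero : Oelt k := Ov 0 0 0.
Definition Oadd (x y : Oelt k) : Oelt k := Ov (c0 x + c0 y) (c1 x + c1 y) (c2 x + c2 y).
Definition Oscale (a : k) (x : Oelt k) : Oelt k :=
  Ov (a%:P * c0 x) (a%:P * c1 x) (a%:P * c2 x).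

(* k[t]-bilinear bracket determined by
   [v0,v1] = -v2 (t-1), [v1,v2] = -v0, [v2,v0] = v1 t. *)
Definition Obr (x y : Oelt k) : Oelt k :=
  Ov (- (c1 x * c2 y - c2 x * c1 y))
     ((c2 x * c0 y - c0 x * c2 y) * 'X)
     (- ((c0 x * c1 y - c1 x * c0 y) * ('X - 1))).

Definition is_Lie_ideal (I : Oelt k -> Prop) : Prop :=
  [/\ I Ozero,
      (forall x y, I x -> I y -> I (Oadd x y)),
      (forall a x, I x -> I (Oscale a x)) &
      (forall x y, I y -> I (Obr x y))].

Definition is_poly_ideal (J : {poly k} -> Prop) : Prop :=
  [/\ J 0,
      (forall p q, J p -> J q -> J (p + q)) &
      (forall r p, J p -> J (r * p))].

Definition inOJ (J : {poly k} -> Prop) (x : Oelt k) : Prop :=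
  [/\ J (c0 x), J (c1 x) & J (c2 x)].

Definition mulTT (J : {poly k} -> Prop) (q : {poly k}) : Prop :=
  exists2 p, J p & q = p * ('X * ('X - 1)).

Definition J_of (I : Oelt k -> Prop) (p : {poly k}) : Prop :=
  exists p1 p2, I (Ov p p1 p2).
End Ons.

(* Main.v *)
Require Import Defs.
From mathcomp Require Import all_boot all_order all_algebra.
From mathcomp Require Import ring.
Local Open Scope ring_scope.

Lemma c0_in (k : fieldType) (I : Oelt k -> Prop) (E : Oelt k) (p : {poly k}) :
  I E -> c0 E = p -> J_of I p.
Proof. case: E => a b c HE H; subst p; by exists b, c. Qed.
Arguments c0_in {k I E p}.

Lemma Ieq (k : fieldType) (I : Oelt k -> Prop) (x y : Oelt k) : I x -> x = y -> I y.
Proof. by move=> H <-. Qed.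
Arguments Ieq {k I x y}.

Theorem proposition4p6 (k : fieldType) (I : Oelt k -> Prop) :
  (2%:R : k) != 0 ->
  is_Lie_ideal I ->
  is_poly_ideal (J_of I) /\
  (forall x, inOJ (mulTT (J_of I)) x -> I x) /\
  (forall x, I x -> inOJ (J_of I) x).
Proof.
move=> _ [I0 Iadd Isc Ibr].
split; [split|split].
- by exists 0, 0.
- move=> p q [p1 [p2 Hp]] [q1 [q2 Hq]].
  by exists (p1 + q1), (p2 + q2); exact: (Iadd _ _ Hp Hq).
- move=> r p [p1 [p2 Hp]].
  set y := Ov p p1 p2 in Hp.
  apply: (c0_in (Iadd _ _ (Ibr (Ov 0 0 r) _ (Ibr (Ov 0 0 1) _ Hp))
                     (Ibr (Ov 0 r 0) _ (Ibr (Ov 0 1 0) _ Hp)))).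
  rewrite /= ; ring.
- case=> a b c [[pa Ja Ea] [pb Jb Eb] [pc Jc Ec]]; rewrite /= in Ea Eb Ec; subst a b c.
  set T := 'X * ('X - 1).
  have key : forall p, J_of I p ->
      [/\ I (Ov (p * T) 0 0), I (Ov 0 (p * T) 0) & I (Ov 0 0 (p * T))].
    move=> p [p1 [p2 Hp]].
    have H3 : I (Ov 0 0 (p * T)).
      apply: (Ieq (Ibr (Ov (-1) 0 0) _ (Ibr (Ov 0 0 1) _ Hp))).
      rewrite /Obr /T /=; congr Ov; ring.
    split => //.
      apply: (Ieq (Ibr (Ov 0 (-1) 0) _ H3)).
      rewrite /Obr /T /=; congr Ov; ring.
    apply: (Ieq (Ibr (Ov (-1) 0 0) _ (Ibr (Ov 0 1 0) _ Hp))).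
    rewrite /Obr /T /=; congr Ov; ring.
  have [A _ _] := key _ Ja; have [_ B _] := key _ Jb; have [_ _ C] := key _ Jc.
  apply: (Ieq (Iadd _ _ A (Iadd _ _ B C))).
  rewrite /Oadd /=; congr Ov; ring.
- case=> a b c Hy; split.
  + by exists b, c.
  + apply: (c0_in (Ibr (Ov 0 0 1) _ Hy)); rewrite /=; ring.
  + apply: (c0_in (Ibr (Ov 0 (-1) 0) _ Hy)); rewrite /=; ring.
Qed.
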